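(* Let $n$ be an odd positive integer and $q$ an odd prime power. Then the group $\Gamma L_1(1,q^n)=\Gamma L(1,q^n)\cap SL(n,q)$ does not act transitively on $\mathbb{F}_{q^n}\setminus\{0\}$.
   Context: Regard $\mathbb{F}_{q^n}$ as an $n$-dimensional $\mathbb{F}_q$-vector space, so $GL(n,q)=GL_{\mathbb{F}_q}(\mathbb{F}_{q^n})$. Let $\alpha$ generate $\mathbb{F}_{q^n}^*$, let $\tau(z)=\alpha z$ and $\sigma(z)=z^q$. $\Gamma L(1,q^n)$ is the subgroup of $GL(n,q)$ generated by $\tau$ and $\sigma$ (of order $n(q^n-1)$), and $\Gamma L_1(1,q^n)$ is its intersection with $SL(n,q)$. *)

(* Defs.v *)
From HB Require Import structures.
From mathcomp Require Import all_boot all_order all_algebra all_field.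
Set Implicit Arguments. Unset Strict Implicit. Unset Printing Implicit Defensive.
Import GRing.Theory.
Local Open Scope ring_scope.

(* Setting: F = F_q a finite field, L = F_{q^n} a finite-dimensional field
   extension of F, viewed as an F-vector space of dimension n = \dim {:L}. *)

Section GammaL.
Variables (F : finFieldType) (L : fieldExtType F).

Definition lin_det (f : L -> L) : F :=
  \det (\matrix_(i, j) coord (vbasis {:L}) j (f (tnth (vbasis {:L}) i))).

Definition tau_map (alpha : L) : L -> L := fun z => alpha * z.
Definition sigma_map : L -> L := fun z => z ^+ #|F|.

(* Gamma L(1,q^n): the group generated by tau and sigma (a finite group of
   bijections, so the monoid they generate is the group they generate);
   membership is up to extensional equality of maps. *)
Inductive in_GammaL (alpha : L) : (L -> L) -> Prop :=
  | GL_id : in_GammaL alpha id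
  | GL_tau g : in_GammaL alpha g -> in_GammaL alpha (tau_map alpha \o g)
  | GL_sigma g : in_GammaL alpha g -> in_GammaL alpha (sigma_map \o g)
  | GL_ext g h : in_GammaL alpha g -> (forall z, g z = h z) -> in_GammaL alpha h.

Definition in_GammaL1 (alpha : L) (g : L -> L) : Prop :=
  in_GammaL alpha g /\ lin_det g = 1.

End GammaL.

(* Main.v *)
Require Import Defs.
From HB Require Import structures.
From mathcomp Require Import all_boot all_order all_algebra all_field.
Import GRing.Theory.
Local Open Scope ring_scope.
Set Implicit Arguments.

Lemma frobn (F : finFieldType) (L : fieldExtType F) (z : L) :
  z ^+ (#|F| ^ \dim {:L}) = z.
Proof.
pose finL := FinFieldExtType L.
have H : #|finL| = (#|F| ^ \dim {:L})%N.
  have H1 := @card_vspace F (finvect_type L) (Vector.class (finvect_type L)) fullv.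
  have H2 := @card_vspacef F (finvect_type L) (Vector.class (finvect_type L)).
  rewrite H2 in H1. exact H1.
rewrite -H. exact: (@expf_card finL z).
Qed.

Section H.
Variables (F : finFieldType) (L : fieldExtType F).

Definition linm (f : L -> L) := forall (a : F) u v, f (a *: u + v) = a *: f u + f v.

Local Notation ldet := (@lin_det F L).
Local Notation e := (vbasis (fullv : {vspace L})).
Definition Mx (f : L -> L) :=
  \matrix_(i, j) coord e j (f (tnth e i)).

Lemma lin_detE f : ldet f = \det (Mx f).
Proof. by []. Qed.

Lemma linm_sum f (lf : linm f) n (c : 'I_n -> F) (v : 'I_n -> L) :
  f (\sum_i c i *: v i) = \sum_i c i *: f (v i).
Proof.
have f0 : f 0 = 0.
  have := lf 1 0 0; rewrite !scale1r !addr0 => /(congr1 (fun x => x - f 0)).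
  by rewrite subrr addrK => <-.
apply: (big_rec2 (fun x y => f x = y)) => [//|i y1 y2 _ <-]; exact: lf.
Qed.

Lemma Mx_comp f g : linm f -> Mx (f \o g) = Mx g *m Mx f.
Proof.
move=> lf; apply/matrixP => i j; rewrite !mxE /=.
rewrite {1}(coord_vbasis (memvf (g (tnth e i)))).
rewrite linm_sum // raddf_sum /=.
apply: eq_bigr => l _; by rewrite !mxE linearZ /= !(tnth_nth 0).
Qed.

Lemma det_comp f g : linm f -> ldet (f \o g) = ldet g * ldet f.
Proof. by move=> lf; rewrite !lin_detE Mx_comp // det_mulmx. Qed.

Lemma det_ext f g : (forall z, f z = g z) -> ldet f = ldet g.
Proof.
move=> H; rewrite !lin_detE; congr (\det _); apply/matrixP => i j.
by rewrite !mxE H.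
Qed.

Lemma det_scal (c : F) : ldet (fun z => c%:A * z) = c ^+ \dim {:L}.
Proof.
rewrite lin_detE -det_scalar; congr (\det _); apply/matrixP => i j.
rewrite !mxE mulr_algl linearZ /= (tnth_nth 0) coord_free ?(basis_free (vbasisP _)) //.
by rewrite eq_sym mulr_natr.
Qed.

Lemma det_idm : ldet id = 1.
Proof.
have := det_scal 1; rewrite expr1n => <-; apply: det_ext => z.
by rewrite scale1r mul1r.
Qed.


Lemma frobB (x y : L) : (x - y) ^+ #|F| = x ^+ #|F| - y ^+ #|F|.
Proof.
have [p _ pcharFp] := finPcharP F; rewrite (card_pprimeChar pcharFp).
elim: (logn _ _) => [|n IHn]; first by rewrite !expr1.
rewrite expnSr !exprM {}IHn.
by rewrite -(pchar_lalg L) in pcharFp; rewrite -!(pFrobenius_autE pcharFp) rmorphB.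
Qed.

Lemma frobN (y : L) : (- y) ^+ #|F| = - y ^+ #|F|.
Proof.
have H0 : (#|F| == 0%N) = false.
  by apply/negbTE; rewrite -lt0n ltnW // finNzRing_gt1.
by have := frobB 0 y; rewrite !sub0r expr0n H0 /= sub0r.
Qed.

Lemma frobD (x y : L) : (x + y) ^+ #|F| = x ^+ #|F| + y ^+ #|F|.
Proof. by rewrite -[y]opprK frobB !frobN opprK. Qed.

Lemma linm_sigma : linm (@sigma_map F L).
Proof.
move=> a u v; rewrite /sigma_map frobD exprZn; congr (_ *: _ + _).
exact: expf_card.
Qed.

Lemma linm_tau (a : L) : linm (tau_map a).
Proof. by move=> b u v; rewrite /tau_map mulrDr scalerAr. Qed.

Lemma linm_comp f g : linm f -> linm g -> linm (f \o g).
Proof. by move=> lf lg a u v; rewrite /= lg lf. Qed.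

Lemma GammaL_inv (al : L) g : in_GammaL al g ->
  exists k j, [/\ forall z, g z = al ^+ k * z ^+ (#|F| ^ j), linm g &
    ldet g = ldet (tau_map al) ^+ k * ldet (@sigma_map F L) ^+ j].
Proof.
elim=> [|h _ [k [j [Hf Hl Hd]]]|h _ [k [j [Hf Hl Hd]]]|h h' _ [k [j [Hf Hl Hd]]] Hext].
- exists 0%N, 0%N; split.
  + by move=> z; rewrite expr0 mul1r expn0 expr1.
  + by move=> a u v.
  + by rewrite !expr0 mulr1 det_idm.
- exists k.+1, j; split.
  + by move=> z; rewrite /= Hf /tau_map exprS mulrA.
  + by apply: linm_comp => //; apply: linm_tau.
  + by rewrite det_comp ?Hd ?exprS 1?mulrC ?mulrA //; apply: linm_tau.
- exists (k * #|F|)%N, j.+1; split.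
  + by move=> z; rewrite /= Hf /sigma_map exprMn -!exprM expnSr.
  + by apply: linm_comp => //; apply: linm_sigma.
  + rewrite det_comp ?Hd; last exact: linm_sigma.
    by rewrite exprM expf_card exprSr mulrA.
- exists k, j; split.
  + by move=> z; rewrite -Hext Hf.
  + by move=> a u v; rewrite -!Hext Hl.
  + by rewrite -Hd; apply: det_ext => z; rewrite Hext.
Qed.

Lemma det_tau_pow (al : L) k : ldet (tau_map (al ^+ k)) = ldet (tau_map al) ^+ k.
Proof.
elim: k => [|k IH].
  by rewrite [RHS]expr0 -det_idm; apply: det_ext => z; rewrite /tau_map mul1r.
rewrite [RHS]exprS -IH mulrC -det_comp; last exact: linm_tau.
by apply: det_ext => z; rewrite /tau_map /= exprS mulrA.
Qed.

Lemma det_sig_pow j : ldet (fun z : L => z ^+ (#|F| ^ j)) = ldet (@sigma_map F L) ^+ j.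
Proof.
elim: j => [|j IH].
  by rewrite [RHS]expr0 -det_idm; apply: det_ext => z; rewrite expn0 expr1.
rewrite [RHS]exprS -IH mulrC -det_comp; last exact: linm_sigma.
by apply: det_ext => z; rewrite /sigma_map /= expnSr exprM.
Qed.

End H.

Lemma nonsq (F : finFieldType) : odd #|F| -> exists c : F, forall d, d * d != c.
Proof.
move=> Hq.
case: (boolP [exists c : F, [forall d : F, d * d != c]]) => [/existsP[c /forallP H]|H].
  by exists c.
have Hsq : forall c : F, exists d, d * d == c.
  move=> c; rewrite negb_exists in H; have := forallP H c.
  by rewrite negb_forall => /existsP [d]; rewrite negbK => Hd; exists d.
pose h c := xchoose (Hsq c).
have hK : cancel h (fun d => d * d) by move=> c; apply/eqP; exact: (xchooseP (Hsq c)).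
have hb : bijective h by apply: injF_bij; exact: can_inj hK.
have sK : cancel (fun d => d * d) h by exact: (proj2 (bij_can_sym hb (fun d => d * d)) hK).
have e1 : (1 : F) = -1 by apply: (can_inj sK); rewrite /= mulrNN.
have ch2 : (2 : nat) \in [pchar F].
  by rewrite inE /= -[2%N]/(1 + 1)%N natrD {2}e1 subrr eqxx.
have := card_pprimeChar ch2; move: Hq => /[swap] /= ->.
rewrite oddX /= orbF => /eqP Hl.
have := finNzRing_gt1 F; rewrite (card_pprimeChar ch2) /= Hl.
by [].
Qed.

Unset Implicit Arguments.
Theorem lemma3p2 (F : finFieldType) (L : fieldExtType F) (alpha : L)
  (Hq : odd #|F|) (Hn : odd (\dim {:L}))
  (Halpha : ((#|F| ^ \dim {:L}).-1).-primitive_root alpha) :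
  ~ (forall x y : L, x != 0 -> y != 0 ->
       exists g : L -> L, in_GammaL1 alpha g /\ g x = y).
Proof.
move=> Htr.
have [c nsq] := @nonsq F Hq.
have c0 : c != 0 by apply: contraNneq (nsq 0) => ->; rewrite mulr0.
have cA0 : c%:A != 0 :> L by rewrite scaler_eq0 negb_or c0 oner_neq0.
have [g [[Hg Hd] Hgx]] := Htr 1 (c%:A) (oner_neq0 _) cA0.
have [k [j [Hf _ Hdet]]] := GammaL_inv Hg.
have Hak : alpha ^+ k = c%:A by rewrite -Hgx Hf expr1n mulr1.
set n := \dim {:L} in Hn.
set D := lin_det (tau_map alpha) in Hdet.
set S := lin_det (@sigma_map F L) in Hdet.
have HD : D ^+ k = c ^+ n.
  by rewrite /D -det_tau_pow Hak -det_scal.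
have HS : S ^+ n = 1.
  rewrite /S -det_sig_pow -(@det_idm F L); apply: det_ext => z.
  exact: frobn.
have H1 : c ^+ n * S ^+ j = 1 by rewrite -HD -Hdet.
set m := n./2.
have hn : n.+1 = (m.+1 + m.+1)%N.
  by rewrite addnn doubleS -[in LHS](odd_double_half n) Hn.
move/eqP: (nsq ((c * S ^+ j) ^+ m.+1)); apply.
rewrite -exprD -hn exprS exprMn -exprM mulnC exprM HS expr1n mulr1.
by rewrite mulrAC -mulrA H1 mulr1.
Qed.
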